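(* Let $(\mathcal{P},+)$ be a reparametrization category and let $D,E$ be $\mathcal{P}$-spaces. There is a natural homeomorphism \[\varinjlim(D\otimes E)\cong\varinjlim D\times\varinjlim E.\]
   Context: All enriched categories are enriched over the cartesian closed category $\mathbf{Top}$ of ($\Delta$-generated) topological spaces. A reparametrization category is a small enriched semimonoidal category $(\mathcal{P},\otimes)$ (hom-sets are spaces, composition and $\mathcal{P}(a,b)\times\mathcal{P}(c,d)\to\mathcal{P}(a\otimes c,b\otimes d)$ continuous) such that: (1) the semimonoidal structure is strict; (2) all spaces $\mathcal{P}(\ell,\ell')$ are contractible; (3) for every map $\phi:\ell\to\ell'$ and all objects $\ell'_1,\ell'_2$ with $\ell'_1\otimes\ell'_2=\ell'$, there exist maps $\phi_1:\ell_1\to\ell'_1$, $\phi_2:\ell_2\to\ell'_2$ with $\phi=\phi_1\otimes\phi_2$. One writes $\ell+\ell':=\ell\otimes\ell'$ on objects. A $\mathcal{P}$-space is an enriched functor $\mathcal{P}^{op}\to\mathbf{Top}$; $\varinjlim$ denotes the colimit in $\mathbf{Top}$ of the diagram. The tensor product is $D\otimes E=\int^{(\ell_1,\ell_2)}\mathcal{P}(-,\ell_1+\ell_2)\times D(\ell_1)\times E(\ell_2)$. *)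

(* Defs.v *)
From Stdlib Require Import Reals ClassicalEpsilon FunctionalExtensionality
  PropExtensionality ProofIrrelevance.
Open Scope R_scope.

Record space := Space { carrier :> Type; opens : (carrier -> Prop) -> Prop }.

Definition is_topology (X : space) : Prop :=
  opens X (fun _ => True) /\
  (forall U V, opens X U -> opens X V -> opens X (fun x => U x /\ V x)) /\
  (forall (I : Type) (U : I -> X -> Prop),
      (forall i, opens X (U i)) -> opens X (fun x => exists i, U i x)).

Definition continuous (X Y : space) (f : X -> Y) : Prop :=
  forall U, opens Y U -> opens X (fun x => U (f x)).

Definition homeomorphism (X Y : space) (f : X -> Y) : Prop :=
  exists g : Y -> X, (forall x, g (f x) = x) /\ (forall y, f (g y) = y) /\
    continuous X Y f /\ continuous Y X g.

Definition simplex_pt (n : nat) : Type :=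
  {x : nat -> R | (forall i, (i <= n)%nat -> 0 <= x i) /\
                  (forall i, (n < i)%nat -> x i = 0) /\ sum_f_R0 x n = 1}.

Definition simplex (n : nat) : space :=
  Space (simplex_pt n) (fun U => forall p, U p -> exists eps, 0 < eps /\
    forall q : simplex_pt n,
      (forall i, (i <= n)%nat -> Rabs (proj1_sig q i - proj1_sig p i) < eps) -> U q).

Definition interval_pt : Type := {t : R | 0 <= t <= 1}.
Definition unit_interval : space :=
  Space interval_pt (fun U => forall p, U p -> exists eps, 0 < eps /\
    forall q : interval_pt, Rabs (proj1_sig q - proj1_sig p) < eps -> U q).
Definition I0 : interval_pt := exist _ 0 (conj (Rle_refl 0) Rle_0_1).
Definition I1 : interval_pt := exist _ 1 (conj Rle_0_1 (Rle_refl 1)).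

Definition delta_opens (X : space) (U : X -> Prop) : Prop :=
  forall (n : nat) (s : simplex n -> X),
    continuous (simplex n) X s -> opens (simplex n) (fun p => U (s p)).

Definition deltaify (X : space) : space := Space X (delta_opens X).

Definition delta_generated (X : space) : Prop :=
  is_topology X /\ (forall U, delta_opens X U -> opens X U).

Definition prod_space (X Y : space) : space :=
  Space (X * Y)%type (fun U => forall p, U p -> exists A B,
    opens X A /\ opens Y B /\ A (fst p) /\ B (snd p) /\
    forall q : X * Y, A (fst q) -> B (snd q) -> U q).

Definition dprod (X Y : space) : space := deltaify (prod_space X Y).

Definition sum_space (I : Type) (X : I -> space) : space :=
  Space (sigT (fun i => carrier (X i)))
        (fun U => forall i, opens (X i) (fun x => U (existT _ i x))).

Inductive eqclos {X : Type} (R : X -> X -> Prop) : X -> X -> Prop :=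
| ec_base x y : R x y -> eqclos R x y
| ec_refl x : eqclos R x x
| ec_sym x y : eqclos R x y -> eqclos R y x
| ec_trans x y z : eqclos R x y -> eqclos R y z -> eqclos R x z.

Definition canon {X : Type} (R : X -> X -> Prop) (x : X) : X :=
  epsilon (inhabits x) (eqclos R x).

Lemma canon_spec {X : Type} (R : X -> X -> Prop) (x : X) : eqclos R x (canon R x).
Proof. unfold canon. apply epsilon_spec. exists x. apply ec_refl. Qed.

Lemma canon_eq {X : Type} (R : X -> X -> Prop) (x y : X) :
  eqclos R x y -> canon R x = canon R y.
Proof.
  intros H. unfold canon.
  assert (E : eqclos R x = eqclos R y).
  { apply functional_extensionality; intro z; apply propositional_extensionality;
    split; intro Hz.
    - eapply ec_trans; [apply ec_sym; exact H | exact Hz].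
    - eapply ec_trans; [exact H | exact Hz]. }
  rewrite E. f_equal. apply proof_irrelevance.
Qed.

Lemma canon_idem {X : Type} (R : X -> X -> Prop) (x : X) :
  canon R (canon R x) = canon R x.
Proof. symmetry. apply canon_eq. apply canon_spec. Qed.

Definition quot {X : Type} (R : X -> X -> Prop) : Type := {x : X | canon R x = x}.

Definition cls {X : Type} (R : X -> X -> Prop) (x : X) : quot R :=
  exist _ (canon R x) (canon_idem R x).

Definition qspace (S : space) (R : S -> S -> Prop) : space :=
  Space (quot R) (fun U => opens S (fun x => U (cls R x))).

Record rcat := RCat {
  obj : Type;
  hom : obj -> obj -> space;
  comp : forall a b c : obj, hom b c -> hom a b -> hom a c;
  idm : forall a : obj, hom a a;
  tens : obj -> obj -> obj;
  tensm : forall a b c d : obj, hom a b -> hom c d -> hom (tens a c) (tens b d) }.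

Arguments obj : clear implicits.
Arguments hom {_}.
Arguments comp {_ a b c}.
Arguments idm {_}.
Arguments tens {_}.
Arguments tensm {_ a b c d}.

Definition castH {P : rcat} {a a' b b' : obj P} (e1 : a = a') (e2 : b = b')
  (f : hom a b) : hom a' b' :=
  eq_rect b (fun y => hom a' y) (eq_rect a (fun x => hom x b) f a' e1) b' e2.

Definition contractible (X : space) : Prop :=
  exists (x0 : X) (H : dprod unit_interval X -> X),
    continuous (dprod unit_interval X) X H /\
    (forall x, H (I0, x) = x) /\ (forall x, H (I1, x) = x0).

Definition is_reparam (P : rcat) : Prop :=
  (forall a b : obj P, delta_generated (hom a b)) /\
  (forall (a b c d : obj P) (f : hom a b) (g : hom b c) (h : hom c d),
      comp h (comp g f) = comp (comp h g) f) /\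
  (forall (a b : obj P) (f : hom a b), comp (idm b) f = f) /\
  (forall (a b : obj P) (f : hom a b), comp f (idm a) = f) /\
  (forall a b c : obj P,
      continuous (dprod (hom b c) (hom a b)) (hom a c) (fun p => comp (fst p) (snd p))) /\
  (forall a b c d : obj P,
      continuous (dprod (hom a b) (hom c d)) (hom (tens a c) (tens b d))
                 (fun p => tensm (fst p) (snd p))) /\
  (forall a b : obj P, tensm (idm a) (idm b) = idm (tens a b)) /\
  (forall (a b c a' b' c' : obj P) (f : hom b c) (g : hom a b) (f' : hom b' c') (g' : hom a' b'),
      comp (tensm f f') (tensm g g') = tensm (comp f g) (comp f' g')) /\
  (* (1) strictness *)
  (forall a b c : obj P, tens (tens a b) c = tens a (tens b c)) /\
  (forall (a b c d e f : obj P) (x : hom a b) (y : hom c d) (z : hom e f)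
     (e1 : tens (tens a c) e = tens a (tens c e))
     (e2 : tens (tens b d) f = tens b (tens d f)),
      castH e1 e2 (tensm (tensm x y) z) = tensm x (tensm y z)) /\
  (* (2) contractible hom-spaces *)
  (forall a b : obj P, contractible (hom a b)) /\
  (* (3) splitting of maps *)
  (forall (l l' : obj P) (phi : hom l l') (l1' l2' : obj P) (e : tens l1' l2' = l'),
      exists (l1 l2 : obj P) (e0 : tens l1 l2 = l) (phi1 : hom l1 l1') (phi2 : hom l2 l2'),
        phi = castH e0 e (tensm phi1 phi2)).

Record pspace (P : rcat) := PSpace {
  pob : obj P -> space;
  pact : forall a b : obj P, hom a b -> pob b -> pob a }.

Arguments pob {_}.
Arguments pact {_} _ {a b}.

Definition is_pspace {P : rcat} (D : pspace P) : Prop :=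
  (forall l, delta_generated (pob D l)) /\
  (forall a b : obj P,
      continuous (dprod (hom a b) (pob D b)) (pob D a) (fun p => pact D (fst p) (snd p))) /\
  (forall a (x : pob D a), pact D (idm a) x = x) /\
  (forall a b c (f : hom a b) (g : hom b c) (x : pob D c),
      pact D (comp g f) x = pact D f (pact D g x)).

Definition is_pmorph {P : rcat} (D D' : pspace P) (eta : forall l, pob D l -> pob D' l)
  : Prop :=
  (forall l, continuous (pob D l) (pob D' l) (eta l)) /\
  (forall a b (f : hom a b) (x : pob D b), eta a (pact D f x) = pact D' f (eta b x)).

Definition colim_rel {P : rcat} (D : pspace P) :
  sum_space (obj P) (pob D) -> sum_space (obj P) (pob D) -> Prop :=
  fun u v => exists (a b : obj P) (f : hom a b) (x : pob D b),
    u = existT _ a (pact D f x) /\ v = existT _ b x.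

Definition colim {P : rcat} (D : pspace P) : space :=
  qspace (sum_space (obj P) (pob D)) (colim_rel D).

Definition colim_map {P : rcat} {D D' : pspace P} (eta : forall l, pob D l -> pob D' l)
  (q : colim D) : colim D' :=
  cls (colim_rel D')
    (match proj1_sig q with existT _ l x => existT _ l (eta l x) end).

(* Tensor product  (D ⊗ E)(l) = ∫^{(l1,l2)} P(l, l1+l2) × D(l1) × E(l2)     *)

Section Tensor.
Context {P : rcat} (D E : pspace P).

Definition tpiece (l : obj P) (p : obj P * obj P) : space :=
  dprod (dprod (hom l (tens (fst p) (snd p))) (pob D (fst p))) (pob E (snd p)).

Definition tens_rel (l : obj P) :
  sum_space _ (tpiece l) -> sum_space _ (tpiece l) -> Prop :=
  fun u v => exists (l1 l2 l1' l2' : obj P) (al : hom l1 l1') (be : hom l2 l2')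
      (phi : hom l (tens l1 l2)) (x : pob D l1') (y : pob E l2'),
    u = existT (fun p => carrier (tpiece l p)) (l1', l2')
               ((comp (tensm al be) phi, x), y) /\
    v = existT (fun p => carrier (tpiece l p)) (l1, l2)
               ((phi, pact D al x), pact E be y).

Definition tens_ob (l : obj P) : space :=
  qspace (sum_space _ (tpiece l)) (tens_rel l).

Definition tens_act (a b : obj P) (psi : hom a b) (q : tens_ob b) : tens_ob a :=
  cls (tens_rel a)
    (match proj1_sig q with
     | existT _ p t =>
         existT (fun p => carrier (tpiece a p)) p
                ((comp (fst (fst t)) psi, snd (fst t)), snd t)
     end).

Definition ptensor : pspace P := PSpace P tens_ob tens_act.

End Tensor.

Definition tens_map {P : rcat} {D D' E E' : pspace P}
  (eta : forall l, pob D l -> pob D' l) (theta : forall l, pob E l -> pob E' l)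
  (l : obj P) (q : pob (ptensor D E) l) : pob (ptensor D' E') l :=
  cls (tens_rel D' E' l)
    (match proj1_sig q with
     | existT _ p t =>
         existT (fun p => carrier (tpiece D' E' l p)) p
                ((fst (fst t), eta (fst p) (snd (fst t))), theta (snd p) (snd t))
     end).

(* Main.v *)
Require Import Defs.
From Stdlib Require Import Arith Reals Lra Lia ClassicalEpsilon FunctionalExtensionality PropExtensionality ProofIrrelevance Classical.
Open Scope R_scope.

Lemma opens_ext (X : space) (U V : X -> Prop) :
  opens X U -> (forall x, U x <-> V x) -> opens X V.
Proof.
  intros H E. assert (U = V) as <-; [|exact H].
  apply functional_extensionality; intro x; apply propositional_extensionality; apply E.
Qed.

Definition local (X : space) := forall U : X -> Prop,
  (forall x, U x -> exists V, opens X V /\ V x /\ (forall y, V y -> U y)) -> opens X U.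

Lemma topo_local (X : space) : is_topology X -> local X.
Proof.
  intros [HT [HI HU]] U H.
  set (W := fun i : {x | U x} => proj1_sig (constructive_indefinite_description _ (H _ (proj2_sig i)))).
  assert (HW : forall i, opens X (W i) /\ W i (proj1_sig i) /\ (forall y, W i y -> U y)).
  { intro i. unfold W. destruct (constructive_indefinite_description _ _) as [V HV]. exact HV. }
  apply opens_ext with (fun x => exists i, W i x).
  - apply HU. intro i; apply HW.
  - intro x; split.
    + intros [i Hi]. eapply HW; eauto.
    + intro Hx. exists (exist _ x Hx). apply HW.
Qed.

Lemma cont_comp (X Y Z : space) (f : X -> Y) (g : Y -> Z) :
  continuous X Y f -> continuous Y Z g -> continuous X Z (fun x => g (f x)).
Proof. intros Hf Hg U HU. apply (Hf (fun y => U (g y))). apply Hg. exact HU. Qed.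

Lemma cont_fst (X Y : space) : opens Y (fun _ => True) -> continuous (prod_space X Y) X fst.
Proof.
  intros HY U HU [x y] Hx. exists U, (fun _ => True). simpl in *. tauto.
Qed.

Lemma cont_snd (X Y : space) : opens X (fun _ => True) -> continuous (prod_space X Y) Y snd.
Proof.
  intros HX U HU [x y] Hx. exists (fun _ => True), U. simpl in *. tauto.
Qed.

Lemma cont_delta_dom (X Y : space) (f : X -> Y) : continuous X Y f -> continuous (deltaify X) Y f.
Proof.
  intros Hf U HU n s Hs. apply (Hs (fun x => U (f x))). apply Hf. exact HU.
Qed.

Lemma cont_delta_cod n (X : space) (s : simplex n -> X) :
  continuous (simplex n) X s -> continuous (simplex n) (deltaify X) s.
Proof. intros Hs U HU. apply HU. exact Hs. Qed.

Lemma cont_prodmap (X Y X' Y' : space) (f : X -> X') (g : Y -> Y') :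
  continuous X X' f -> continuous Y Y' g ->
  continuous (prod_space X Y) (prod_space X' Y') (fun p => (f (fst p), g (snd p))).
Proof.
  intros Hf Hg O HO [x y] Hxy. simpl in Hxy.
  destruct (HO _ Hxy) as (A & B & HA & HB & Ha & Hb & HR).
  exists (fun x => A (f x)), (fun y => B (g y)). simpl in *.
  repeat split; auto; try (intros [] ? ?; apply HR; auto).
Qed.

Lemma opens_swap (X Y : space) (O : X * Y -> Prop) :
  opens (prod_space X Y) O -> opens (prod_space Y X) (fun p => O (snd p, fst p)).
Proof.
  intros HO [y x] H. destruct (HO (x, y) H) as (A & B & HA & HB & Ha & Hb & HR).
  exists B, A. simpl in *. repeat split; auto; try (intros [] ? ?; apply HR; auto).
Qed.

Lemma cont_const n (X : space) (c : X) : continuous (simplex n) X (fun _ => c).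
Proof. intros U HU p Hp. exists 1. split; [lra|]. intros; exact Hp. Qed.

Definition sball n (p : nat -> R) r (q : nat -> R) :=
  forall i, (i <= n)%nat -> Rabs (q i - p i) < r.

Lemma fin_max (n : nat) (f : nat -> R) (r : R) :
  (forall i, (i <= n)%nat -> f i < r) -> exists M, M < r /\ forall i, (i <= n)%nat -> f i <= M.
Proof.
  induction n as [|n IH]; intros H.
  - exists (f 0%nat). split; [apply H; lia|]. intros i Hi. replace i with 0%nat by lia. lra.
  - destruct IH as [M [HM1 HM2]]. { intros; apply H; lia. }
    exists (Rmax M (f (S n))). split.
    + apply Rmax_lub_lt; auto.
    + intros i Hi. destruct (Nat.eq_dec i (S n)) as [->|].
      * apply Rmax_r.
      * eapply Rle_trans; [apply HM2; lia| apply Rmax_l].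
Qed.

Lemma sball_open n (p : simplex_pt n) r :
  opens (simplex n) (fun q => sball n (proj1_sig p) r (proj1_sig q)).
Proof.
  intros q Hq. destruct (fin_max n (fun i => Rabs (proj1_sig q i - proj1_sig p i)) r Hq)
    as [M [HM1 HM2]].
  exists (r - M). split; [lra|]. intros q' Hq' i Hi.
  specialize (Hq' i Hi). specialize (HM2 i Hi). simpl in HM2.
  replace (proj1_sig q' i - proj1_sig p i) with
    ((proj1_sig q' i - proj1_sig q i) + (proj1_sig q i - proj1_sig p i)) by ring.
  eapply Rle_lt_trans; [apply Rabs_triang|]. lra.
Qed.

Lemma simplex_topo n : is_topology (simplex n).
Proof.
  split; [|split].
  - intros p _. exists 1. split; [lra|]. auto.
  - intros U V HU HV p [Hu Hv].
    destruct (HU p Hu) as [e1 [He1 H1]]. destruct (HV p Hv) as [e2 [He2 H2]].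
    exists (Rmin e1 e2). split; [apply Rmin_pos; auto|].
    intros q Hq. split; [apply H1|apply H2]; intros i Hi; specialize (Hq i Hi);
      [eapply Rlt_le_trans; [exact Hq| apply Rmin_l]|eapply Rlt_le_trans; [exact Hq| apply Rmin_r]].
  - intros I U HU p [i Hi]. destruct (HU i p Hi) as [e [He H]].
    exists e. split; auto. intros q Hq. exists i. auto.
Qed.

Lemma pair_cont n (X Y : space) (f : simplex n -> X) (g : simplex n -> Y) :
  continuous _ _ f -> continuous _ _ g ->
  continuous (simplex n) (prod_space X Y) (fun u => (f u, g u)).
Proof.
  intros Hf Hg O HO u Hu. destruct (HO _ Hu) as (A & B & HA & HB & Ha & Hb & HR).
  simpl in *. destruct (Hf A HA u Ha) as [e1 [He1 H1]]. destruct (Hg B HB u Hb) as [e2 [He2 H2]].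
  exists (Rmin e1 e2). split; [apply Rmin_pos; auto|].
  intros q Hq. apply HR; [apply H1|apply H2]; intros i Hi; specialize (Hq i Hi);
    [eapply Rlt_le_trans; [exact Hq| apply Rmin_l]|eapply Rlt_le_trans; [exact Hq| apply Rmin_r]].
Qed.

Definition filt {X : Type} (F : (X -> Prop) -> Prop) :=
  F (fun _ => True) /\ (forall A B, F A -> F B -> F (fun x => A x /\ B x)) /\
  (forall A B : X -> Prop, F A -> (forall x, A x -> B x) -> F B).

Lemma R1 {X : Type} (F : (X -> Prop) -> Prop) (HF : filt F) (H : X -> R -> Prop) l u :
  l <= u ->
  (forall s, l <= s <= u -> exists V r, F V /\ 0 < r /\
      forall x, V x -> forall s', Rabs (s' - s) < r -> H x s') ->
  exists V, F V /\ forall x, V x -> forall s, l <= s <= u -> H x s.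
Proof.
  intros Hlu Hyp. destruct HF as [FT [FI FM]].
  set (E := fun s => l <= s <= u /\ exists V, F V /\
              forall x, V x -> forall s', l <= s' <= s -> H x s').
  assert (Eb : bound E). { exists u. intros s [Hs _]. lra. }
  assert (El : E l).
  { split; [lra|]. destruct (Hyp l (conj (Rle_refl l) Hlu)) as (V & r & HV & Hr & HH).
    exists V. split; auto. intros x Hx s' Hs'. apply (HH x Hx). replace (s' - l) with 0 by lra.
    rewrite Rabs_R0; lra. }
  destruct (completeness E Eb (ex_intro _ l El)) as [m [Hm1 Hm2]].
  assert (Hlm : l <= m) by (apply Hm1; auto).
  assert (Hmu : m <= u). { apply Hm2. intros s [Hs _]. lra. }
  destruct (Hyp m (conj Hlm Hmu)) as (V0 & r0 & HV0 & Hr0 & HH0).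
  assert (Hex : exists s, E s /\ m - r0 < s).
  { apply NNPP. intro Hn. assert (m <= m - r0); [|lra]. apply Hm2. intros s Es.
    destruct (Rle_lt_dec s (m - r0)); auto. exfalso; apply Hn; exists s; split; auto. }
  destruct Hex as (s & [Hs1 (V1 & HV1 & HH1)] & Hs2).
  set (s2 := Rmin (m + r0/2) u).
  assert (Es2 : E s2).
  { split. { unfold s2; split; [apply Rmin_glb; lra|apply Rmin_r]. }
    exists (fun x => V0 x /\ V1 x). split; [apply FI; auto|].
    intros x [Hx0 Hx1] s' Hs'. destruct (Rle_lt_dec s' s).
    - apply HH1; auto; lra.
    - apply HH0; auto. assert (s2 <= m + r0/2) by apply Rmin_l.
      apply Rabs_def1; lra. }
  assert (Hs2m : s2 <= m) by (apply Hm1; auto).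
  assert (Hmu' : m = u).
  { destruct (Rle_lt_dec u m); [lra|]. exfalso. revert Hs2m. unfold s2. apply Rmin_case; lra. }
  assert (s2 = u). { unfold s2. subst m. apply Rmin_right. lra. }
  destruct Es2 as [_ (V & HV & HH)]. exists V. split; auto.
  intros x Hx s' Hs'. apply HH; auto; lra.
Qed.

Definition upd (t : nat -> R) (k : nat) (v : R) : nat -> R :=
  fun i => if Nat.eqb i k then v else t i.

Lemma upd_same t k : upd t k (t k) = t.
Proof. apply functional_extensionality; intro i. unfold upd.
  destruct (Nat.eqb_spec i k); subst; auto. Qed.

Definition cube n (lo hi t : nat -> R) := forall i, (i <= n)%nat -> lo i <= t i <= hi i.

Lemma TL (n : nat) : forall (X : Type) (F : (X -> Prop) -> Prop), filt F ->
  forall (lo hi : nat -> R) (G : X -> (nat -> R) -> Prop),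
  (forall i, (i <= n)%nat -> lo i <= hi i) ->
  (forall t, cube n lo hi t -> exists V r, F V /\ 0 < r /\
     forall x, V x -> forall t', (forall i, (i <= n)%nat -> Rabs (t' i - t i) < r) -> G x t') ->
  exists V, F V /\ forall x, V x -> forall t, cube n lo hi t -> G x t.
Proof.
  induction n as [|n IH]; intros X F HF lo hi G Hlh Hyp.
  - destruct (R1 F HF (fun x s => forall t, t 0%nat = s -> G x t) (lo 0%nat) (hi 0%nat))
      as (V & HV & HH).
    + apply Hlh; lia.
    + intros s Hs. destruct (Hyp (fun _ => s)) as (V & r & HV & Hr & HH).
      { intros i Hi. replace i with 0%nat by lia. auto. }
      exists V, r. split; auto. split; auto. intros x Hx s' Hs' t Ht.
      apply HH; auto. intros i Hi. replace i with 0%nat by lia. rewrite Ht; auto.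
    + exists V. split; auto. intros x Hx t Ht. apply (HH x Hx (t 0%nat)); auto.
  - destruct HF as [FT [FI FM]].
    set (F' := fun s0 (W : X * R -> Prop) => exists V r, F V /\ 0 < r /\
                forall x, V x -> forall s, Rabs (s - s0) < r -> W (x, s)).
    assert (HF' : forall s0, filt (F' s0)).
    { intro s0. split; [|split].
      - exists (fun _ => True), 1. repeat split; auto; lra.
      - intros A B (V1 & r1 & H1 & Hr1 & HA) (V2 & r2 & H2 & Hr2 & HB).
        exists (fun x => V1 x /\ V2 x), (Rmin r1 r2). split; [apply FI; auto|].
        split; [apply Rmin_pos; auto|]. intros x [] s Hs. split.
        + apply HA; auto. eapply Rlt_le_trans; [exact Hs|apply Rmin_l].
        + apply HB; auto. eapply Rlt_le_trans; [exact Hs|apply Rmin_r].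
      - intros A B (V & r & HV & Hr & HA) HAB. exists V, r. repeat split; auto. }
    destruct (R1 F (conj FT (conj FI FM))
       (fun x s => forall t, cube n lo hi t -> G x (upd t (S n) s)) (lo (S n)) (hi (S n)))
      as (V & HV & HH).
    + apply Hlh; lia.
    + intros s0 Hs0.
      destruct (IH (X * R)%type (F' s0) (HF' s0) lo hi (fun xs t => G (fst xs) (upd t (S n) (snd xs))))
        as (W & (V & r & HV & Hr & HW) & HH).
      * intros; apply Hlh; lia.
      * intros t Ht. destruct (Hyp (upd t (S n) s0)) as (V & r & HV & Hr & HH).
        { intros i Hi. unfold upd. destruct (Nat.eqb_spec i (S n)); [subst; auto|].
          apply Ht; lia. }
        exists (fun xs => V (fst xs) /\ Rabs (snd xs - s0) < r), r. split.
        { exists V, r. repeat split; auto. }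
        split; auto. intros [x s] [Hx Hs] t' Ht'. simpl in *. apply HH; auto.
        intros i Hi. unfold upd. destruct (Nat.eqb_spec i (S n)); auto. apply Ht'; lia.
      * exists V, r. split; auto. split; auto. intros x Hx s Hs t Ht.
        apply (HH (x, s)); auto.
    + exists V. split; auto. intros x Hx t Ht. rewrite <- (upd_same t (S n)).
      apply HH; auto. intros i Hi; apply Ht; lia.
Qed.

Lemma sum_diff_lt (f g : nat -> R) n r :
  (forall i, (i <= n)%nat -> Rabs (f i - g i) < r) ->
  Rabs (sum_f_R0 f n - sum_f_R0 g n) < (INR n + 1) * r.
Proof.
  induction n as [|n IH]; intros H.
  - simpl. specialize (H 0%nat (le_n _)). lra.
  - simpl sum_f_R0. rewrite S_INR.
    replace (sum_f_R0 f n + f (S n) - (sum_f_R0 g n + g (S n))) with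
      ((sum_f_R0 f n - sum_f_R0 g n) + (f (S n) - g (S n))) by ring.
    eapply Rle_lt_trans; [apply Rabs_triang|].
    assert (Rabs (sum_f_R0 f n - sum_f_R0 g n) < (INR n + 1) * r) by (apply IH; intros; apply H; lia).
    specialize (H (S n) (le_n _)). lra.
Qed.

Lemma simplex_closed n (t : nat -> R) :
  ~ (exists q : simplex_pt n, forall i, (i <= n)%nat -> proj1_sig q i = t i) ->
  exists r, 0 < r /\ forall q : simplex_pt n,
    ~ (forall i, (i <= n)%nat -> Rabs (proj1_sig q i - t i) < r).
Proof.
  intros Hn.
  destruct (classic (exists i, (i <= n)%nat /\ t i < 0)) as [(i & Hi & Hti)|Hpos].
  - exists (- t i). split; [lra|]. intros [q [Hq1 [Hq2 Hq3]]] H. simpl in H.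
    specialize (H i Hi). specialize (Hq1 i Hi). apply Rabs_def2 in H. lra.
  - destruct (Req_dec (sum_f_R0 t n) 1) as [Hs|Hs].
    + exfalso. apply Hn.
      set (t' := fun i => if Nat.leb i n then t i else 0).
      assert (E : forall i, (i <= n)%nat -> t' i = t i).
      { intros i Hi. unfold t'. destruct (Nat.leb_spec i n); [auto|lia]. }
      unshelve eexists (exist _ t' _); [|exact E]. split; [|split].
      * intros i Hi. rewrite E; auto. destruct (Rle_lt_dec 0 (t i)); auto.
        exfalso; apply Hpos; eauto.
      * intros i Hi. unfold t'. destruct (Nat.leb_spec i n); [lia|auto].
      * rewrite <- Hs. apply sum_eq. auto.
    + exists (Rabs (sum_f_R0 t n - 1) / (INR n + 1)).
      assert (Hn1 : 0 < INR n + 1) by (pose proof (pos_INR n); lra).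
      split. { apply Rdiv_lt_0_compat; auto. apply Rabs_pos_lt. lra. }
      intros [q [Hq1 [Hq2 Hq3]]] H. simpl in H.
      pose proof (sum_diff_lt _ t n _ H) as H1.
      replace ((INR n + 1) * (Rabs (sum_f_R0 t n - 1) / (INR n + 1))) with
        (Rabs (sum_f_R0 t n - 1)) in H1 by (field; lra).
      rewrite Hq3 in H1. rewrite <- Rabs_Ropp in H1.
      replace (- (1 - sum_f_R0 t n)) with (sum_f_R0 t n - 1) in H1 by ring. lra.
Qed.

Lemma abs_le_cube a c r : Rabs (a - c) <= r -> c - r <= a <= c + r.
Proof. intro H. unfold Rabs in H. destruct (Rcase_abs (a - c)); lra. Qed.

Lemma tube (X : space) (HX : is_topology X) n (G : X * simplex_pt n -> Prop) :
  opens (prod_space X (simplex n)) G -> forall x0 (c : nat -> R) r, 0 <= r ->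
  (forall q : simplex_pt n, (forall i, (i<=n)%nat -> Rabs (proj1_sig q i - c i) <= r) -> G (x0, q)) ->
  exists V, opens X V /\ V x0 /\ forall x (q : simplex_pt n), V x ->
     (forall i, (i<=n)%nat -> Rabs (proj1_sig q i - c i) <= r) -> G (x, q).
Proof.
  intros HG x0 c r Hr H0. destruct HX as [XT [XI XU]].
  set (F := fun S : X -> Prop => exists V, opens X V /\ V x0 /\ forall x, V x -> S x).
  assert (HF : filt F).
  { split; [|split].
    - exists (fun _ => True). repeat split; auto.
    - intros A B (V1 & H1 & H1' & H1'') (V2 & H2 & H2' & H2'').
      exists (fun x => V1 x /\ V2 x). split; [apply XI; auto|]. split; auto. intros y [? ?]; auto.
    - intros A B (V & H1 & H2 & H3) HAB. exists V. repeat split; auto. }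
  destruct (TL n X F HF (fun i => c i - r) (fun i => c i + r)
     (fun x t => forall q : simplex_pt n, (forall i, (i <= n)%nat -> proj1_sig q i = t i) -> G (x, q)))
    as (S & (V & HV & HV0 & HVS) & HS).
  - intros; lra.
  - intros t Ht.
    destruct (classic (exists q : simplex_pt n, forall i, (i <= n)%nat -> proj1_sig q i = t i))
      as [[q Hq]|Hnq].
    + assert (Gq : G (x0, q)).
      { apply H0. intros i Hi. rewrite Hq; auto. specialize (Ht i Hi). simpl in Ht.
        apply Rabs_le; lra. }
      destruct (HG _ Gq) as (A & B & HA & HB & Ha & Hb & HR). simpl in Ha, Hb.
      destruct (HB q Hb) as [e [He HeB]].
      exists A, e. split; [exists A; auto|]. split; auto.
      intros x Hx t' Ht' q' Hq'. apply (HR (x, q')); auto. apply HeB.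
      intros i Hi. rewrite Hq', Hq; auto.
    + destruct (simplex_closed n t Hnq) as [e [He Hne]].
      exists (fun _ => True), e. split; [exists (fun _ => True); auto|]. split; auto.
      intros x _ t' Ht' q' Hq'. exfalso. apply (Hne q'). intros i Hi.
      replace (proj1_sig q' i - t i) with (t' i - t i) by (rewrite Hq'; auto). auto.
  - exists V. split; auto. split; auto. intros x q Hx Hq.
    apply (HS x (HVS x Hx) (proj1_sig q)); auto.
    intros i Hi. apply abs_le_cube; auto.
Qed.

Definition final_fam (Q : space) (I : Type) (X : I -> space) (f : forall i, X i -> Q) :=
  (forall i, is_topology (X i)) /\ (forall a : Q, exists i x, f i x = a) /\
  (forall U, (forall i, opens (X i) (fun x => U (f i x))) -> opens Q U).

Lemma Lfam (Q : space) (I : Type) (X : I -> space) (f : forall i, X i -> Q) :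
  final_fam Q I X f -> forall n (O : Q * simplex_pt n -> Prop),
  (forall i, opens (prod_space (X i) (simplex n)) (fun p => O (f i (fst p), snd p))) ->
  opens (prod_space Q (simplex n)) O.
Proof.
  intros [HX [Hs Hfin]] n O HO [a0 t0] H0.
  destruct (Hs a0) as (i0 & x0 & <-).
  destruct (HO i0 (x0, t0) H0) as (A & B & HA & HB & Ha & Hb & HR). simpl in Ha, Hb.
  destruct (HB t0 Hb) as [e [He HeB]].
  set (r := e / 2).
  exists (fun a => forall q : simplex_pt n, (forall i, (i<=n)%nat -> Rabs (proj1_sig q i - proj1_sig t0 i) <= r) -> O (a, q)).
  exists (fun q => sball n (proj1_sig t0) r (proj1_sig q)).
  split; [|split; [apply sball_open|split; [|split]]].
  - apply Hfin. intro i. apply topo_local; [apply HX|]. intros x Hx.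
    destruct (tube (X i) (HX i) n (fun p => O (f i (fst p), snd p)) (HO i) x (proj1_sig t0) r)
      as (V & HV & Vx & HVG).
    + unfold r; lra.
    + exact Hx.
    + exists V. split; auto. split; auto. intros y Hy q Hq. apply (HVG y q); auto.
  - intros q Hq. apply (HR (x0, q)); auto. apply HeB. intros i Hi.
    specialize (Hq i Hi). unfold r in Hq. simpl. lra.
  - intros i Hi. simpl. unfold Rminus; rewrite Rplus_opp_r, Rabs_R0. unfold r; lra.
  - intros [a q] Ha' Hq. apply Ha'. intros i Hi. left. apply Hq; auto.
Qed.

Definition SI (X : space) := {m : nat & {s : simplex m -> X | continuous _ _ s}}.
Definition SX (X : space) (i : SI X) : space := simplex (projT1 i).
Definition Sf (X : space) (i : SI X) : SX X i -> X := proj1_sig (projT2 i).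

Definition pt0_fun : nat -> R := fun i => if Nat.eqb i 0 then 1 else 0.
Lemma pt0_prop : (forall i, (i <= 0)%nat -> 0 <= pt0_fun i) /\
  (forall i, (0 < i)%nat -> pt0_fun i = 0) /\ sum_f_R0 pt0_fun 0 = 1.
Proof.
  unfold pt0_fun. split; [|split].
  - intros i Hi. destruct (Nat.eqb i 0); lra.
  - intros i Hi. destruct (Nat.eqb_spec i 0); [lia|auto].
  - simpl. reflexivity.
Qed.
Definition pt0 : simplex_pt 0 := exist _ pt0_fun pt0_prop.

Lemma dg_final (X : space) : delta_generated X -> final_fam X (SI X) (SX X) (Sf X).
Proof.
  intros [HT HD]. split; [|split].
  - intro i. apply simplex_topo.
  - intro a. exists (existT _ 0%nat (exist _ (fun _ : simplex 0 => a) (cont_const 0 X a))).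
    exists pt0. reflexivity.
  - intros U HU. apply HD. intros m s Hs.
    exact (HU (existT _ m (exist _ s Hs))).
Qed.

Lemma final_True Q I X f : final_fam Q I X f -> opens Q (fun _ => True).
Proof. intros [HX [_ Hfin]]. apply Hfin. intro i. apply (HX i). Qed.

Lemma spt_eq n (p q : simplex_pt n) : proj1_sig p = proj1_sig q -> p = q.
Proof. destruct p, q; simpl; intros ->; f_equal; apply proof_irrelevance. Qed.

Lemma sum_nonneg (f : nat -> R) n : (forall i, (i <= n)%nat -> 0 <= f i) -> 0 <= sum_f_R0 f n.
Proof.
  induction n; intros H; simpl. apply H; lia.
  pose proof (IHn (fun i Hi => H i ltac:(lia))). pose proof (H (S n) (le_n _)). lra.
Qed.

Lemma term_le_sum (f : nat -> R) n i : (forall i, (i <= n)%nat -> 0 <= f i) -> (i <= n)%nat ->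
  f i <= sum_f_R0 f n.
Proof.
  induction n; intros H Hi; simpl.
  - replace i with 0%nat by lia. lra.
  - destruct (Nat.eq_dec i (S n)) as [->|Hne].
    + pose proof (sum_nonneg f n (fun j Hj => H j ltac:(lia))). lra.
    + pose proof (IHn (fun j Hj => H j ltac:(lia)) ltac:(lia)). pose proof (H (S n) (le_n _)). lra.
Qed.

Lemma coord_bnd n (p : simplex_pt n) i : 0 <= proj1_sig p i <= 1.
Proof.
  destruct p as [x [H1 [H2 H3]]]; simpl. destruct (le_lt_dec i n).
  - split; auto. rewrite <- H3. apply term_le_sum; auto.
  - rewrite H2; auto. lra.
Qed.

Lemma sum_split (F : nat -> R) a b :
  sum_f_R0 F (a + S b) = sum_f_R0 F a + sum_f_R0 (fun j => F (S a + j)%nat) b.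
Proof.
  induction b.
  - simpl. replace (a + 1)%nat with (S a) by lia. simpl. replace (a + 0)%nat with a by lia. reflexivity.
  - replace (a + S (S b))%nat with (S (a + S b)) by lia. simpl sum_f_R0 at 1. rewrite IHb.
    simpl. replace (S (a + S b)) with (S (S (a + b))) by lia.
    replace (a + S b)%nat with (S (a + b)) by lia. ring.
Qed.

Lemma DS (F : nat -> R) k m :
  sum_f_R0 F (k * S m + m) = sum_f_R0 (fun i => sum_f_R0 (fun j => F (i * S m + j)%nat) m) k.
Proof.
  induction k.
  - simpl. reflexivity.
  - replace (S k * S m + m)%nat with ((k * S m + m) + S m)%nat by lia.
    rewrite sum_split, IHk. change (sum_f_R0 ?G (S k)) with (sum_f_R0 G k + G (S k)). f_equal.
    apply sum_eq. intros j Hj. f_equal. lia.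
Qed.

Lemma sum_exch (G : nat -> nat -> R) k m :
  sum_f_R0 (fun i => sum_f_R0 (fun j => G i j) m) k =
  sum_f_R0 (fun j => sum_f_R0 (fun i => G i j) k) m.
Proof.
  induction k.
  - simpl. reflexivity.
  - simpl sum_f_R0 at 1. rewrite IHk. rewrite <- plus_sum. apply sum_eq. intros; simpl; reflexivity.
Qed.

Lemma decode m i j : (j <= m)%nat -> ((i * S m + j) / S m = i /\ (i * S m + j) mod S m = j)%nat.
Proof.
  intro Hj. assert (Hd : ((i * S m + j) / S m = i)%nat).
  { rewrite Nat.div_add_l by lia. rewrite Nat.div_small by lia. lia. }
  split; auto. pose proof (Nat.div_mod (i * S m + j) (S m) ltac:(lia)). rewrite Hd in H. lia.
Qed.

Lemma decode_bnd k m r : (r <= k * S m + m)%nat -> (r / S m <= k /\ r mod S m <= m)%nat.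
Proof.
  intro Hr. pose proof (Nat.div_mod r (S m) ltac:(lia)). pose proof (Nat.mod_upper_bound r (S m) ltac:(lia)).
  split; [|lia]. destruct (le_lt_dec (r / S m) k); auto. nia.
Qed.

Section PS.
Variables k m : nat.
Definition NN := (k * S m + m)%nat.

Definition prodf (a b : nat -> R) : nat -> R := fun r => a (r / S m)%nat * b (r mod S m)%nat.

Lemma prodf_prop (a : simplex_pt k) (b : simplex_pt m) :
  (forall i, (i <= NN)%nat -> 0 <= prodf (proj1_sig a) (proj1_sig b) i) /\
  (forall i, (NN < i)%nat -> prodf (proj1_sig a) (proj1_sig b) i = 0) /\
  sum_f_R0 (prodf (proj1_sig a) (proj1_sig b)) NN = 1.
Proof.
  split; [|split].
  - intros i _. unfold prodf. pose proof (coord_bnd _ a (i / S m)). pose proof (coord_bnd _ b (i mod S m)).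
    apply Rmult_le_pos; lra.
  - intros i Hi. unfold prodf. destruct a as [x [H1 [H2 H3]]]; simpl.
    rewrite H2; [ring|]. unfold NN in Hi.
    destruct (le_lt_dec (i / S m) k); auto.
    pose proof (Nat.div_mod i (S m) ltac:(lia)). pose proof (Nat.mod_upper_bound i (S m) ltac:(lia)). nia.
  - unfold NN. rewrite DS. destruct a as [x [H1 [H2 H3]]]. destruct b as [y [G1 [G2 G3]]]. simpl.
    rewrite <- H3. apply sum_eq. intros i Hi. unfold prodf.
    rewrite <- (Rmult_1_r (x i)). rewrite <- G3. rewrite scal_sum. apply sum_eq.
    intros j Hj. destruct (decode m i j Hj) as [-> ->]. ring.
Qed.

Definition prodpt (a : simplex_pt k) (b : simplex_pt m) : simplex_pt NN :=
  exist _ _ (prodf_prop a b).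

Definition m1f (T : nat -> R) : nat -> R :=
  fun i => if Nat.leb i k then sum_f_R0 (fun j => T (i * S m + j)%nat) m else 0.
Definition m2f (T : nat -> R) : nat -> R :=
  fun j => if Nat.leb j m then sum_f_R0 (fun i => T (i * S m + j)%nat) k else 0.

Lemma m1_prop (T : simplex_pt NN) :
  (forall i, (i <= k)%nat -> 0 <= m1f (proj1_sig T) i) /\
  (forall i, (k < i)%nat -> m1f (proj1_sig T) i = 0) /\
  sum_f_R0 (m1f (proj1_sig T)) k = 1.
Proof.
  split; [|split].
  - intros i Hi. unfold m1f. destruct (Nat.leb i k); [|lra]. apply sum_nonneg. intros. apply coord_bnd.
  - intros i Hi. unfold m1f. destruct (Nat.leb_spec i k); [lia|auto].
  - destruct T as [x [H1 [H2 H3]]]; simpl. rewrite <- H3. unfold NN. rewrite DS.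
    apply sum_eq. intros i Hi. unfold m1f. destruct (Nat.leb_spec i k); [auto|lia].
Qed.

Lemma m2_prop (T : simplex_pt NN) :
  (forall i, (i <= m)%nat -> 0 <= m2f (proj1_sig T) i) /\
  (forall i, (m < i)%nat -> m2f (proj1_sig T) i = 0) /\
  sum_f_R0 (m2f (proj1_sig T)) m = 1.
Proof.
  split; [|split].
  - intros i Hi. unfold m2f. destruct (Nat.leb i m); [|lra]. apply sum_nonneg. intros. apply coord_bnd.
  - intros i Hi. unfold m2f. destruct (Nat.leb_spec i m); [lia|auto].
  - destruct T as [x [H1 [H2 H3]]]; simpl. rewrite <- H3. unfold NN. rewrite DS.
    rewrite sum_exch. apply sum_eq. intros i Hi. unfold m2f. destruct (Nat.leb_spec i m); [auto|lia].
Qed.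

Definition marg1 (T : simplex_pt NN) : simplex_pt k := exist _ _ (m1_prop T).
Definition marg2 (T : simplex_pt NN) : simplex_pt m := exist _ _ (m2_prop T).

Lemma INR_pos n : 0 < INR n + 1.
Proof. pose proof (pos_INR n); lra. Qed.

Lemma marg1_cont : continuous (simplex NN) (simplex k) marg1.
Proof.
  intros U HU T HT. destruct (HU _ HT) as [e [He HeU]].
  exists (e / (INR m + 1)). split. { apply Rdiv_lt_0_compat; auto. apply INR_pos. }
  intros T' HT'. apply HeU. intros i Hi. simpl. unfold m1f.
  destruct (Nat.leb_spec i k); [|lia].
  replace e with ((INR m + 1) * (e / (INR m + 1))) by (field; pose proof (INR_pos m); lra).
  apply sum_diff_lt. intros j Hj. apply HT'. unfold NN. nia.
Qed.

Lemma marg2_cont : continuous (simplex NN) (simplex m) marg2.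
Proof.
  intros U HU T HT. destruct (HU _ HT) as [e [He HeU]].
  exists (e / (INR k + 1)). split. { apply Rdiv_lt_0_compat; auto. apply INR_pos. }
  intros T' HT'. apply HeU. intros j Hj. simpl. unfold m2f.
  destruct (Nat.leb_spec j m); [|lia].
  replace e with ((INR k + 1) * (e / (INR k + 1))) by (field; pose proof (INR_pos k); lra).
  apply sum_diff_lt. intros i Hi. apply HT'. unfold NN. nia.
Qed.

Lemma marg1_prod a b : marg1 (prodpt a b) = a.
Proof.
  apply spt_eq. apply functional_extensionality; intro i. unfold marg1, prodpt; cbn [proj1_sig]. unfold m1f, prodf.
  destruct (Nat.leb_spec i k).
  - destruct b as [y [G1 [G2 G3]]]; cbn [proj1_sig].
    transitivity (proj1_sig a i * sum_f_R0 y m); [|rewrite G3; ring]. rewrite scal_sum. apply sum_eq.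
    intros j Hj. destruct (decode m i j Hj) as [-> ->]. ring.
  - destruct a as [x [H1 [H2 H3]]]; cbn [proj1_sig]. rewrite H2; auto.
Qed.

Lemma marg2_prod a b : marg2 (prodpt a b) = b.
Proof.
  apply spt_eq. apply functional_extensionality; intro j. unfold marg2, prodpt; cbn [proj1_sig]. unfold m2f, prodf.
  destruct (Nat.leb_spec j m).
  - destruct a as [x [H1 [H2 H3]]]; cbn [proj1_sig].
    transitivity (proj1_sig b j * sum_f_R0 x k); [|rewrite H3; ring]. rewrite scal_sum. apply sum_eq.
    intros i Hi. destruct (decode m i j H) as [-> ->]. ring.
  - destruct b as [y [G1 [G2 G3]]]; cbn [proj1_sig]. rewrite G2; auto.
Qed.

Lemma prod_est (a a' b b' : R) : 0 <= b' <= 1 -> 0 <= a <= 1 ->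
  Rabs (a' * b' - a * b) <= Rabs (a' - a) + Rabs (b' - b).
Proof.
  intros Hb Ha. replace (a' * b' - a * b) with ((a' - a) * b' + a * (b' - b)) by ring.
  eapply Rle_trans; [apply Rabs_triang|]. rewrite !Rabs_mult.
  rewrite (Rabs_right b') by lra. rewrite (Rabs_right a) by lra.
  pose proof (Rabs_pos (a' - a)). pose proof (Rabs_pos (b' - b)).
  apply Rplus_le_compat; [rewrite <- (Rmult_1_r (Rabs (a' - a))) at 2|rewrite <- (Rmult_1_l (Rabs (b' - b))) at 2];
  apply Rmult_le_compat; lra.
Qed.

Lemma prod_simplex_dg (O : simplex_pt k * simplex_pt m -> Prop) :
  (forall N (h : simplex N -> prod_space (simplex k) (simplex m)), continuous _ _ h ->
      opens (simplex N) (fun u => O (h u))) ->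
  opens (prod_space (simplex k) (simplex m)) O.
Proof.
  intros H [a b] Hab.
  assert (Hc := pair_cont NN (simplex k) (simplex m) marg1 marg2 marg1_cont marg2_cont).
  specialize (H NN _ Hc). simpl in H.
  assert (H0 : O (marg1 (prodpt a b), marg2 (prodpt a b))) by (rewrite marg1_prod, marg2_prod; exact Hab).
  destruct (H _ H0) as [e [He HeO]].
  exists (fun a' => sball k (proj1_sig a) (e/2) (proj1_sig a')),
         (fun b' => sball m (proj1_sig b) (e/2) (proj1_sig b')).
  split; [apply sball_open|]. split; [apply sball_open|].
  split. { simpl. intros i _. unfold Rminus; rewrite Rplus_opp_r, Rabs_R0; lra. }
  split. { simpl. intros i _. unfold Rminus; rewrite Rplus_opp_r, Rabs_R0; lra. }
  intros [a' b'] Ha' Hb'. simpl in Ha', Hb'.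
  assert (E : (a', b') = (marg1 (prodpt a' b'), marg2 (prodpt a' b'))) by (rewrite marg1_prod, marg2_prod; reflexivity).
  rewrite E. apply HeO.
  intros r Hr. unfold prodpt; cbn [proj1_sig]. unfold prodf. destruct (decode_bnd k m r Hr) as [Hi Hj].
  eapply Rle_lt_trans; [apply prod_est; apply coord_bnd|].
  specialize (Ha' _ Hi). specialize (Hb' _ Hj). lra.
Qed.
End PS.

Lemma cont_id (X : space) : continuous X X (fun x => x).
Proof. intros U HU; exact HU. Qed.

Lemma prod_final (Q1 Q2 : space) I1 (X1 : I1 -> space) f1 I2 (X2 : I2 -> space) f2 :
  final_fam Q1 I1 X1 f1 -> final_fam Q2 I2 X2 f2 ->
  (forall i, delta_generated (X1 i)) -> (forall j, delta_generated (X2 j)) ->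
  forall W : Q1 * Q2 -> Prop,
  (forall i j, delta_opens (prod_space (X1 i) (X2 j)) (fun p => W (f1 i (fst p), f2 j (snd p)))) ->
  delta_opens (prod_space Q1 Q2) W.
Proof.
  intros F1 F2 D1 D2 W HW n s Hs.
  pose proof (final_True _ _ _ _ F1) as T1. pose proof (final_True _ _ _ _ F2) as T2.
  assert (Hs1 : continuous (simplex n) Q1 (fun u => fst (s u))).
  { exact (cont_comp _ _ _ s fst Hs (cont_fst Q1 Q2 T2)). }
  assert (Hs2 : continuous (simplex n) Q2 (fun u => snd (s u))).
  { exact (cont_comp _ _ _ s snd Hs (cont_snd Q1 Q2 T1)). }
  set (s2 := fun u => snd (s u)) in *.
  assert (O1 : opens (prod_space Q1 (simplex n)) (fun p => W (fst p, s2 (snd p)))).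
  { apply (Lfam _ _ _ _ F1). intro i.
    apply (Lfam _ _ _ _ (dg_final _ (D1 i))). intros [m [sg Hsg]]. cbn.
    assert (O3 : opens (prod_space (simplex m) Q2) (fun p => W (f1 i (sg (fst p)), snd p))).
    { eapply opens_ext.
      - apply (opens_swap Q2 (simplex m) (fun p => W (f1 i (sg (snd p)), fst p))).
        apply (Lfam _ _ _ _ F2). intro j.
        apply (Lfam _ _ _ _ (dg_final _ (D2 j))). intros [k [tau Htau]]. cbn.
        apply prod_simplex_dg. intros N h Hh.
        apply (HW i j N (fun u => (sg (snd (h u)), tau (fst (h u))))).
        apply pair_cont.
        + apply (cont_comp _ _ _ (fun u => snd (h u)) sg); auto.
          apply (cont_comp _ _ _ h snd Hh). apply cont_snd. apply simplex_topo.
        + apply (cont_comp _ _ _ (fun u => fst (h u)) tau); auto.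
          apply (cont_comp _ _ _ h fst Hh). apply cont_fst. apply simplex_topo.
      - intros [a b]; simpl. tauto. }
    apply (cont_prodmap (simplex m) (simplex n) (simplex m) Q2 (fun x => x) s2 (cont_id _) Hs2 _ O3). }
  eapply opens_ext.
  - apply (pair_cont n Q1 (simplex n) (fun u => fst (s u)) (fun u => u) Hs1 (cont_id _) _ O1).
  - intro u. simpl. unfold s2. rewrite <- surjective_pairing. tauto.
Qed.


Lemma cls_rep {X : Type} (Rl : X -> X -> Prop) (z : quot Rl) : cls Rl (proj1_sig z) = z.
Proof.
  destruct z as [x Hx]. unfold cls. simpl.
  apply eq_sig_hprop; [intros; apply proof_irrelevance|]. simpl. exact Hx.
Qed.

Lemma cls_eq {X : Type} (Rl : X -> X -> Prop) x y : eqclos Rl x y -> cls Rl x = cls Rl y.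
Proof.
  intro H. unfold cls. apply eq_sig_hprop; [intros; apply proof_irrelevance|]. simpl.
  apply canon_eq; auto.
Qed.

Lemma resp_eqclos {X Y : Type} (Rl : X -> X -> Prop) (g : X -> Y) :
  (forall x y, Rl x y -> g x = g y) -> forall x y, eqclos Rl x y -> g x = g y.
Proof. intros H x y E. induction E; auto. congruence. Qed.

Lemma lift_cls {X Y : Type} (Rl : X -> X -> Prop) (g : X -> Y) :
  (forall x y, Rl x y -> g x = g y) -> forall x, g (proj1_sig (cls Rl x)) = g x.
Proof. intros H x. simpl. symmetry. apply (resp_eqclos Rl g H). apply canon_spec. Qed.

Section Alg.
Context {P : rcat}.

Definition phi0 (D E : pspace P) (l : obj P)
  (w : {p : obj P * obj P & carrier (tpiece D E l p)}) : colim D * colim E :=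
  match w with existT _ p t =>
    (cls (colim_rel D) (existT (fun l => carrier (pob D l)) (fst p) (snd (fst t))),
     cls (colim_rel E) (existT (fun l => carrier (pob E l)) (snd p) (snd t)))
  end.

Definition phi1 (D E : pspace P) (z : {l : obj P & carrier (tens_ob D E l)}) : colim D * colim E :=
  match z with existT _ l q => phi0 D E l (proj1_sig q) end.

Definition Phi (D E : pspace P) (z : colim (ptensor D E)) : dprod (colim D) (colim E) :=
  phi1 D E (proj1_sig z).

Definition act0 (D E : pspace P) (a b : obj P) (psi : hom a b)
  (w : {p : obj P * obj P & carrier (tpiece D E b p)}) : {p : obj P * obj P & carrier (tpiece D E a p)} :=
  match w with existT _ p t =>
    existT (fun p => carrier (tpiece D E a p)) p ((Defs.comp (fst (fst t)) psi, snd (fst t)), snd t)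
  end.

Hypothesis HP : is_reparam P.

Lemma act0_resp (D E : pspace P) a b (psi : hom a b) w w' :
  tens_rel D E b w w' -> cls (tens_rel D E a) (act0 D E a b psi w) = cls (tens_rel D E a) (act0 D E a b psi w').
Proof.
  intros (l1 & l2 & l1' & l2' & al & be & phi & x & y & -> & ->).
  apply cls_eq. apply ec_base. exists l1, l2, l1', l2', al, be, (Defs.comp phi psi), x, y.
  simpl. split; auto. destruct HP as (_ & Hass & _). rewrite Hass. reflexivity.
Qed.

Lemma tens_act_cls (D E : pspace P) a b (psi : hom a b) w :
  tens_act D E a b psi (cls (tens_rel D E b) w) = cls (tens_rel D E a) (act0 D E a b psi w).
Proof.
  unfold tens_act.
  exact (lift_cls (tens_rel D E b) (fun w => cls (tens_rel D E a) (act0 D E a b psi w))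
           (act0_resp D E a b psi) w).
Qed.

Lemma phi0_resp (D E : pspace P) l w w' : tens_rel D E l w w' -> phi0 D E l w = phi0 D E l w'.
Proof.
  intros (l1 & l2 & l1' & l2' & al & be & phi & x & y & -> & ->). simpl.
  f_equal; apply cls_eq; apply ec_sym; apply ec_base; unfold colim_rel; [exists l1, l1', al, x | exists l2, l2', be, y]; auto.
Qed.

Lemma phi1_resp (D E : pspace P) z z' : colim_rel (ptensor D E) z z' -> phi1 D E z = phi1 D E z'.
Proof.
  intros (a & b & f & q & -> & ->). change (phi0 D E a (proj1_sig (tens_act D E a b f q)) = phi0 D E b (proj1_sig q)).
  rewrite <- (cls_rep _ q). rewrite tens_act_cls.
  rewrite (lift_cls _ (phi0 D E a) (phi0_resp D E a)).
  rewrite (lift_cls _ (phi0 D E b) (phi0_resp D E b)).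
  destruct (proj1_sig q) as [p t]. reflexivity.
Qed.

Lemma Phi_cls (D E : pspace P) l w :
  Phi D E (cls _ (existT (fun l => carrier (tens_ob D E l)) l (cls (tens_rel D E l) w))) = phi0 D E l w.
Proof.
  unfold Phi. rewrite (lift_cls _ (phi1 D E) (phi1_resp D E)). simpl.
  exact (lift_cls _ (phi0 D E l) (phi0_resp D E l) w).
Qed.

Definition psi0 (D E : pspace P) (u : {l : obj P & carrier (pob D l)}) (v : {l : obj P & carrier (pob E l)})
  : colim (ptensor D E) :=
  match u, v with existT _ l1 x, existT _ l2 y =>
   cls (colim_rel (ptensor D E)) (existT (fun l => carrier (tens_ob D E l)) (tens l1 l2)
      (cls (tens_rel D E (tens l1 l2))
         (existT (fun p => carrier (tpiece D E (tens l1 l2) p)) (l1, l2) ((idm (tens l1 l2), x), y))))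
  end.

Definition Psi (D E : pspace P) (ab : dprod (colim D) (colim E)) : colim (ptensor D E) :=
  psi0 D E (proj1_sig (fst ab)) (proj1_sig (snd ab)).

End Alg.

Section Main.
Context {P : rcat} (HP : is_reparam P).

Lemma comp_idl (a b : obj P) (f : hom a b) : Defs.comp (idm b) f = f.
Proof. destruct HP as (_ & _ & H & _). apply H. Qed.
Lemma comp_idr (a b : obj P) (f : hom a b) : Defs.comp f (idm a) = f.
Proof. destruct HP as (_ & _ & _ & H & _). apply H. Qed.

Context (D E : pspace P) (HD : is_pspace D) (HE : is_pspace E).

Lemma pactD_id (a : obj P) (x : pob D a) : pact D (idm a) x = x.
Proof. destruct HD as (_ & _ & H & _). apply H. Qed.
Lemma pactE_id (a : obj P) (x : pob E a) : pact E (idm a) x = x.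
Proof. destruct HE as (_ & _ & H & _). apply H. Qed.

Lemma psi0_resp1 v u u' : colim_rel D u u' -> psi0 D E u v = psi0 D E u' v.
Proof.
  intros (a & b & f & x & -> & ->). destruct v as [l2 y].
  change (cls (colim_rel (ptensor D E)) (existT (fun l => carrier (tens_ob D E l)) (tens a l2)
      (cls (tens_rel D E (tens a l2))
         (existT (fun p => carrier (tpiece D E (tens a l2) p)) (a, l2) ((idm (tens a l2), pact D f x), y))))
   = cls (colim_rel (ptensor D E)) (existT (fun l => carrier (tens_ob D E l)) (tens b l2)
      (cls (tens_rel D E (tens b l2))
         (existT (fun p => carrier (tpiece D E (tens b l2) p)) (b, l2) ((idm (tens b l2), x), y))))).
  transitivity (cls (colim_rel (ptensor D E)) (existT (fun l => carrier (tens_ob D E l)) (tens a l2)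
      (tens_act D E (tens a l2) (tens b l2) (tensm f (idm l2)) (cls (tens_rel D E (tens b l2))
         (existT (fun p => carrier (tpiece D E (tens b l2) p)) (b, l2) ((idm (tens b l2), x), y)))))).
  - f_equal. f_equal. rewrite (tens_act_cls HP). simpl. rewrite comp_idl.
    apply cls_eq. apply ec_sym. apply ec_base.
    exists a, l2, b, l2, f, (idm l2), (idm (tens a l2)), x, y. rewrite comp_idr, pactE_id. split; reflexivity.
  - apply cls_eq. apply ec_base. eexists _, _, (tensm f (idm l2)), _. split; reflexivity.
Qed.

Lemma psi0_resp2 u v v' : colim_rel E v v' -> psi0 D E u v = psi0 D E u v'.
Proof.
  intros (a & b & g & y & -> & ->). destruct u as [l1 x].
  change (cls (colim_rel (ptensor D E)) (existT (fun l => carrier (tens_ob D E l)) (tens l1 a)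
      (cls (tens_rel D E (tens l1 a))
         (existT (fun p => carrier (tpiece D E (tens l1 a) p)) (l1, a) ((idm (tens l1 a), x), pact E g y))))
   = cls (colim_rel (ptensor D E)) (existT (fun l => carrier (tens_ob D E l)) (tens l1 b)
      (cls (tens_rel D E (tens l1 b))
         (existT (fun p => carrier (tpiece D E (tens l1 b) p)) (l1, b) ((idm (tens l1 b), x), y))))).
  transitivity (cls (colim_rel (ptensor D E)) (existT (fun l => carrier (tens_ob D E l)) (tens l1 a)
      (tens_act D E (tens l1 a) (tens l1 b) (tensm (idm l1) g) (cls (tens_rel D E (tens l1 b))
         (existT (fun p => carrier (tpiece D E (tens l1 b) p)) (l1, b) ((idm (tens l1 b), x), y)))))).
  - f_equal. f_equal. rewrite (tens_act_cls HP). simpl. rewrite comp_idl.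
    apply cls_eq. apply ec_sym. apply ec_base.
    exists l1, a, l1, b, (idm l1), g, (idm (tens l1 a)), x, y. rewrite comp_idr, pactD_id. split; reflexivity.
  - apply cls_eq. apply ec_base. eexists _, _, (tensm (idm l1) g), _. split; reflexivity.
Qed.

Lemma Psi_cls u v : Psi D E (cls _ u, cls _ v) = psi0 D E u v.
Proof.
  unfold Psi. simpl fst; simpl snd.
  rewrite (lift_cls _ (fun u => psi0 D E u (proj1_sig (cls (colim_rel E) v))) (fun x y H => psi0_resp1 _ x y H)).
  exact (lift_cls _ (psi0 D E u) (psi0_resp2 u) v).
Qed.

Lemma Psi_Phi z : Psi D E (Phi D E z) = z.
Proof.
  rewrite <- (cls_rep _ z). destruct (proj1_sig z) as [l q].
  rewrite <- (cls_rep _ q). destruct (proj1_sig q) as [p t].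
  rewrite (Phi_cls HP). destruct p as [l1 l2]. destruct t as [[phi x] y]. simpl.
  rewrite Psi_cls. simpl.
  apply cls_eq. apply ec_sym. apply ec_base.
  exists l, (tens l1 l2), phi, (cls (tens_rel D E (tens l1 l2))
         (existT (fun p => carrier (tpiece D E (tens l1 l2) p)) (l1, l2) ((idm (tens l1 l2), x), y))).
  split; [|reflexivity]. f_equal. simpl. rewrite (tens_act_cls HP). simpl. rewrite comp_idl. reflexivity.
Qed.

Lemma Phi_Psi ab : Phi D E (Psi D E ab) = ab.
Proof.
  destruct ab as [a b]. rewrite <- (cls_rep _ a), <- (cls_rep _ b).
  destruct (proj1_sig a) as [l1 x]. destruct (proj1_sig b) as [l2 y].
  rewrite Psi_cls. simpl. rewrite (Phi_cls HP). reflexivity.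
Qed.
End Main.

Lemma colim_map_cls {P : rcat} (D D' : pspace P) (eta : forall l, pob D l -> pob D' l) :
  is_pmorph D D' eta -> forall l x,
  colim_map eta (cls (colim_rel D) (existT _ l x)) = cls (colim_rel D') (existT _ l (eta l x)).
Proof.
  intros [_ Hn] l x. unfold colim_map.
  refine (lift_cls (colim_rel D) (fun w => cls (colim_rel D')
     (match w with existT _ l x => existT (fun l => carrier (pob D' l)) l (eta l x) end)) _ _).
  intros u v (a & b & f & y & -> & ->). apply cls_eq. apply ec_base.
  exists a, b, f, (eta b y). rewrite Hn. split; reflexivity.
Qed.

Lemma deltaify_True (X : space) : opens (deltaify X) (fun _ => True).
Proof. intros n s Hs. apply simplex_topo. Qed.

Lemma dg_True (X : space) : delta_generated X -> opens X (fun _ => True).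
Proof. intros [[H _] _]. exact H. Qed.

Lemma hom_True {P : rcat} (HP : is_reparam P) (a b : obj P) : opens (hom a b) (fun _ => True).
Proof. apply dg_True. destruct HP as (H & _). apply H. Qed.

Lemma pspace_True {P : rcat} (D : pspace P) (HD : is_pspace D) l : opens (pob D l) (fun _ => True).
Proof. apply dg_True. destruct HD as (H & _). apply H. Qed.

Lemma cont_inj {P : rcat} (D : pspace P) l :
  continuous (pob D l) (colim D) (fun x => cls (colim_rel D) (existT _ l x)).
Proof. intros U HU. exact (HU l). Qed.

Section Cont.
Context {P : rcat} (HP : is_reparam P) (D E : pspace P) (HD : is_pspace D) (HE : is_pspace E).

Lemma Phi_cont : continuous (colim (ptensor D E)) (dprod (colim D) (colim E)) (Phi D E).
Proof.
  intros U HU l p.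
  eapply opens_ext; [|intro t; rewrite (Phi_cls HP); apply iff_refl].
  destruct p as [l1 l2]. simpl.
  intros n s Hs.
  apply (HU n (fun u => (cls (colim_rel D) (existT _ l1 (snd (fst (s u)))),
                         cls (colim_rel E) (existT _ l2 (snd (s u)))))).
  apply pair_cont.
  - apply (cont_comp (simplex n) (pob D l1) (colim D) (fun u => snd (fst (s u))) (fun x => cls (colim_rel D) (existT (fun i => carrier (pob D i)) l1 x))); [|apply cont_inj].
    apply (cont_comp (simplex n) (dprod (hom l (tens l1 l2)) (pob D l1)) (pob D l1) (fun u => fst (s u)) snd).
    + apply (cont_comp _ _ _ s fst Hs). apply cont_fst. apply (pspace_True E HE).
    + apply cont_delta_dom. apply cont_snd. apply (hom_True HP).
  - apply (cont_comp (simplex n) (pob E l2) (colim E) (fun u => snd (s u)) (fun x => cls (colim_rel E) (existT (fun i => carrier (pob E i)) l2 x))); [|apply cont_inj].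
    apply (cont_comp _ _ _ s snd Hs). apply cont_snd. apply deltaify_True.
Qed.

Lemma colim_final (F : pspace P) (HF : is_pspace F) :
  final_fam (colim F) (obj P) (pob F) (fun i x => cls (colim_rel F) (existT _ i x)).
Proof.
  split; [|split].
  - intro i. destruct HF as (H & _). apply H.
  - intro a. rewrite <- (cls_rep _ a). destruct (proj1_sig a) as [i x]. eauto.
  - intros U HU. exact HU.
Qed.

Lemma Psi_cont : continuous (dprod (colim D) (colim E)) (colim (ptensor D E)) (Psi D E).
Proof.
  intros V HV.
  apply (prod_final _ _ _ _ _ _ _ _ (colim_final D HD) (colim_final E HE)).
  - intro i. destruct HD as (H & _). apply H.
  - intro j. destruct HE as (H & _). apply H.
  - intros i j.
    apply (opens_ext (deltaify (prod_space (pob D i) (pob E j)))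
      (fun xy => V (psi0 D E (existT _ i (fst xy)) (existT _ j (snd xy))))).
    2:{ intro xy. rewrite (Psi_cls HP D E HD HE). apply iff_refl. }
    intros n s Hs.
    apply (HV (tens i j) (i, j) n (fun u => ((idm (tens i j), fst (s u)), snd (s u)))).
    apply pair_cont.
    + apply cont_delta_cod. apply pair_cont; [apply cont_const|].
      apply (cont_comp _ _ _ s fst Hs). apply cont_fst. apply (pspace_True E HE).
    + apply (cont_comp _ _ _ s snd Hs). apply cont_snd. apply (pspace_True D HD).
Qed.
End Cont.

Theorem proposition3p10 (P : rcat) (HP : is_reparam P) :
  exists Phi : forall D E : pspace P,
      colim (ptensor D E) -> dprod (colim D) (colim E),
    (forall D E : pspace P, is_pspace D -> is_pspace E ->
       homeomorphism (colim (ptensor D E)) (dprod (colim D) (colim E)) (Phi D E)) /\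
    (forall (D D' E E' : pspace P)
            (eta : forall l, pob D l -> pob D' l)
            (theta : forall l, pob E l -> pob E' l),
       is_pspace D -> is_pspace D' -> is_pspace E -> is_pspace E' ->
       is_pmorph D D' eta -> is_pmorph E E' theta ->
       forall z : colim (ptensor D E),
         Phi D' E' (colim_map (tens_map eta theta) z) =
         (colim_map eta (fst (Phi D E z)), colim_map theta (snd (Phi D E z)))).
Proof.
  exists (fun D E => Phi D E). split.
  - intros D E HD HE. exists (Psi D E).
    split; [apply (Psi_Phi HP D E HD HE)|].
    split; [apply (Phi_Psi HP D E HD HE)|].
    split; [apply (Phi_cont HP D E HE)|apply (Psi_cont HP D E HD HE)].
  - intros D D' E E' eta theta _ _ _ _ Heta Htheta z.
    destruct z as [[l q] Hz]. destruct q as [[p t] Hq].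
    change (Phi D' E' (cls _ (existT (fun l => carrier (tens_ob D' E' l)) l
       (cls (tens_rel D' E' l) (existT (fun p => carrier (tpiece D' E' l p)) p
          ((fst (fst t), eta (fst p) (snd (fst t))), theta (snd p) (snd t)))))) =
       (colim_map eta (cls (colim_rel D) (existT _ (fst p) (snd (fst t)))),
        colim_map theta (cls (colim_rel E) (existT _ (snd p) (snd t))))).
    rewrite (Phi_cls HP). rewrite (colim_map_cls D D' eta Heta), (colim_map_cls E E' theta Htheta).
    reflexivity.
Qed.
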